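(* The time-discrete first order scheme consisting of $$\widehat\rho=\rho^n-\Delta t\nabla\cdot(\rho\mathbf u)^n,\ \widehat{\rho\mathbf u}=(\rho\mathbf u)^n-\Delta t\nabla\cdot(\rho\mathbf u\otimes\mathbf u+p\,\mathrm{Id})^n,\ \widehat{\rho E}=(\rho E)^n-\Delta t\nabla\cdot((\rho E+\Pi)^n\mathbf u^n),$$ $$\rho^{n+1}=\widehat\rho,\qquad (\rho\mathbf u)^{n+1}=\widehat{\rho\mathbf u}-\frac{1-\varepsilon^2}{\varepsilon^2}\Delta t\nabla p^{n+1},$$ and the elliptic pressure equation $$-\frac{(1-\varepsilon^2)^2}{\varepsilon^2}\Delta t^2\nabla\cdot\Big(\frac{(p-p_\infty)^{n+1}}{\widehat\rho}\nabla p^{n+1}\Big)+\frac{p^{n+1}}{\gamma-1}=-\frac{(1-\varepsilon^2)^2}{2\varepsilon^2}\frac{\Delta t^2}{\widehat\rho}\|\nabla p^{n+1}\|^2-(1-\varepsilon^2)\Delta t(p-p_\infty)^{n+1}\nabla\cdot\widehat{\mathbf u}+\frac{\widehat p}{\gamma-1}$$ (with $\widehat{\mathbf u}=\widehat{\rho\mathbf u}/\widehat\rho$, $\widehat p=(\gamma-1)(\widehat{\rho E}-\frac{\varepsilon^2}{2}\widehat\rho\|\widehat{\mathbf u}\|^2)$) is asymptotic preserving in the following sense: the leading order asymptotic expansion of the numerical solution is a consistent approximation of the incompressible Euler equations $$\rho^{(0)}_t+\nabla\cdot(\rho^{(0)}\mathbf u^{(0)})=0,\quad (\rho^{(0)}\mathbf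 u^{(0)})_t+\nabla\cdot(\rho^{(0)}\mathbf u^{(0)}\otimes\mathbf u^{(0)})+\nabla p^{(2)}=0,\quad \nabla\cdot\mathbf u^{(0)}=-\frac{1}{\gamma p^{(0)}}\frac{dp^{(0)}}{dt}.$$
   Context: Nondimensionalised Euler equations in $\mathbb R^d$ with conserved variables $(\rho,\rho\mathbf u,\rho E)$, equation of state $p=(\gamma-1)(\rho E-\frac{\varepsilon^2}{2}\rho\|\mathbf u\|^2)$, $\gamma>1$, reference Mach number $0<\varepsilon\le1$. Auxiliary pressure $\Pi=\varepsilon^2p+(1-\varepsilon^2)p_\infty$ with reference pressure $p_\infty(t)=\inf_{\mathbf x}p(\mathbf x,t)$. The asymptotic analysis expands all variables as $f=f^{(0)}+\varepsilon f^{(1)}+\varepsilon^2f^{(2)}+\mathcal O(\varepsilon^3)$; in the limit system $p^{(0)}=p^{(0)}(t)$ is spatially constant and $p^{(2)}$ is the incompressible pressure. *)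

(* Defs.v *)
From HB Require Import structures.
From mathcomp Require Import all_boot all_order all_algebra.
From mathcomp Require Import all_classical all_reals all_analysis.
Set Implicit Arguments. Unset Strict Implicit. Unset Printing Implicit Defensive.
Import Order.TTheory GRing.Theory Num.Theory.
Import numFieldNormedType.Exports.
Local Open Scope classical_set_scope.
Local Open Scope ring_scope.

Section EulerScheme.
Variables (R : realType) (d : nat).
Local Notation V := 'rV[R]_d.

Definition ev (i : 'I_d) : V := delta_mx 0 i.
Definition pd (i : 'I_d) (f : V -> R) (x : V) : R := derive f x (ev i).

Definition C2b (C : R) (f : V -> R) : Prop :=
  forall x, `|f x| <= C /\ differentiable f x /\
    forall i, `|pd i f x| <= C /\ differentiable (pd i f) x /\
      forall j, `|pd j (pd i f) x| <= C.

Definition expands (F : R -> V -> R) (c : nat -> V -> R) : Prop :=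
  (exists C, forall k, (k <= 2)%N -> C2b C (c k)) /\
  exists (r : R -> V -> R) (C : R), forall e, 0 < e <= 1 ->
    C2b C (r e) /\
    forall x, F e x = c 0%N x + e * c 1%N x + e ^+ 2 * c 2%N x + e ^+ 3 * r e x.

Definition pinf (p : V -> R) : R := inf (range p).

Variables (gam dt : R).
(* data at time level n (as functions of eps and x): density, momentum, total energy *)
Variables (rho : R -> V -> R) (m : 'I_d -> R -> V -> R) (E : R -> V -> R).

Definition pres_n (e : R) (x : V) : R :=
  (gam - 1) * (E e x - e ^+ 2 / 2 * (\sum_(i < d) (m i e x) ^+ 2) / rho e x).
Definition vel (i : 'I_d) (e : R) (x : V) : R := m i e x / rho e x.
Definition Pi_n (e : R) (x : V) : R :=
  e ^+ 2 * pres_n e x + (1 - e ^+ 2) * pinf (pres_n e).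

Definition rhohat (e : R) (x : V) : R :=
  rho e x - dt * \sum_(i < d) pd i (m i e) x.
Definition mhat (i : 'I_d) (e : R) (x : V) : R :=
  m i e x - dt * \sum_(j < d)
     pd j (fun y => m i e y * vel j e y + (if i == j then pres_n e y else 0)) x.
Definition Ehat (e : R) (x : V) : R :=
  E e x - dt * \sum_(j < d) pd j (fun y => (E e y + Pi_n e y) * vel j e y) x.
Definition uhat (i : 'I_d) (e : R) (x : V) : R := mhat i e x / rhohat e x.
Definition phat (e : R) (x : V) : R :=
  (gam - 1) * (Ehat e x - e ^+ 2 / 2 * rhohat e x * \sum_(i < d) (uhat i e x) ^+ 2).

Definition scheme (rho1 : R -> V -> R) (m1 : 'I_d -> R -> V -> R)
    (p1 : R -> V -> R) (e : R) : Prop :=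
  forall x,
  rho1 e x = rhohat e x /\
  (forall i, m1 i e x = mhat i e x - (1 - e ^+ 2) / e ^+ 2 * dt * pd i (p1 e) x) /\
  - ((1 - e ^+ 2) ^+ 2 / e ^+ 2) * dt ^+ 2 *
      \sum_(i < d) pd i (fun y => (p1 e y - pinf (p1 e)) / rhohat e y * pd i (p1 e) y) x
    + p1 e x / (gam - 1)
  = - ((1 - e ^+ 2) ^+ 2 / (2 * e ^+ 2)) * (dt ^+ 2 / rhohat e x)
        * \sum_(i < d) (pd i (p1 e) x) ^+ 2
    - (1 - e ^+ 2) * dt * (p1 e x - pinf (p1 e)) * \sum_(i < d) pd i (uhat i e) x
    + phat e x / (gam - 1).

End EulerScheme.

(* Main.v *)
Require Import Defs.
From HB Require Import structures.
From mathcomp Require Import all_boot all_order all_algebra.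
From mathcomp Require Import all_classical all_reals all_analysis.
From mathcomp Require Import ring lra.
Import Order.TTheory GRing.Theory Num.Theory.
Import numFieldNormedType.Exports.
Local Open Scope ring_scope.

Section Aux.
Context {R : realType} {d : nat}.
Local Notation V := 'rV[R]_d.
Implicit Types (f g : V -> R) (x : V).

Lemma pd_cst (k : R) i x : pd i (fun _ : V => k) x = 0.
Proof. rewrite /pd. have -> : (fun _ : V => k) = cst k by []. by rewrite derive_cst. Qed.

Lemma pd_add {f g} i {x} : differentiable f x -> differentiable g x ->
  pd i (fun y => f y + g y) x = pd i f x + pd i g x.
Proof. by move=> df dg; exact: (deriveD (diff_derivable (v:=ev R i) df) (diff_derivable (v:=ev R i) dg)). Qed.

Lemma pd_mul {f g} i {x} : differentiable f x -> differentiable g x ->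
  pd i (fun y => f y * g y) x = f x * pd i g x + g x * pd i f x.
Proof. by move=> df dg; exact: (deriveM (diff_derivable (v:=ev R i) df) (diff_derivable (v:=ev R i) dg)). Qed.

Lemma pd_inv {f} i {x} : differentiable f x -> f x != 0 ->
  pd i (fun y => (f y)^-1) x = - (f x) ^- 2 * pd i f x.
Proof. by move=> df fx; exact: (deriveV fx (diff_derivable (v:=ev R i) df)). Qed.

Lemma pd_scal (k : R) {f} i {x} : differentiable f x ->
  pd i (fun y => k * f y) x = k * pd i f x.
Proof. by move=> df; exact: (deriveMl k (diff_derivable (v:=ev R i) df)). Qed.

Lemma dfD {f g x} : differentiable f x -> differentiable g x ->
  differentiable (fun y => f y + g y) x.
Proof. by move=> df dg; apply: differentiableD. Qed.
Lemma dfM {f g x} : differentiable f x -> differentiable g x ->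
  differentiable (fun y => f y * g y) x.
Proof. by move=> df dg; apply: differentiableM. Qed.
Lemma dfV {f x} : differentiable f x -> f x != 0 ->
  differentiable (fun y => (f y)^-1) x.
Proof. by move=> df dg; apply: differentiableV. Qed.
Lemma dfC (k : R) x : differentiable (fun _ : V => k) x.
Proof. exact: differentiable_cst. Qed.

Lemma small0 (a K : R) : (forall e : R, 0 < e <= 2^-1 -> `|a| <= K * e) -> a = 0.
Proof.
move=> H; case: (eqVneq a 0) => // a0; exfalso.
have ha : 0 < `|a| by rewrite normr_gt0.
set K' := `|K| + 1.
have hK' : 0 < K' by rewrite /K'; have := normr_ge0 K; lra.
set e := Num.min (2^-1) (`|a| / (2 * K')).
have e1 : e <= 2^-1 by rewrite /e ge_min lexx.
have e2 : e <= `|a| / (2 * K') by rewrite /e ge_min lexx orbT.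
have e0 : 0 < e by rewrite /e lt_min invr_gt0 ltr0n /= divr_gt0 // mulr_gt0.
have := H e; rewrite e0 e1 => /(_ isT) h1.
have h2 : K * e <= K' * e by rewrite ler_pM2r //; have := ler_norm K; rewrite /K'; lra.
have h3 : K' * e <= `|a| / 2.
  have h4 : K' * e <= K' * (`|a| / (2 * K')) by rewrite ler_pM2l.
  have h5 : K' * (`|a| / (2 * K')) = `|a| / 2 by field; rewrite gt_eqF.
  lra.
lra.
Qed.

Definition cvs (f : R -> R) (a : R) :=
  exists K, forall e : R, 0 < e <= 2^-1 -> `|f e - a| <= K * e.

Lemma cvs_uniq {f : R -> R} {a b : R} : cvs f a -> cvs f b -> a = b.
Proof.
move=> [K1 H1] [K2 H2]; apply/eqP; rewrite -subr_eq0; apply/eqP.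
apply: (@small0 _ (K1 + K2)) => e he.
have := H1 e he; have := H2 e he.
have : `|a - b| <= `|f e - b| + `|f e - a|.
  by rewrite -[a - b](_ : (f e - b) - (f e - a) = _); [apply: ler_normB|ring].
lra.
Qed.

Lemma cvs_ext {f g : R -> R} {a : R} : (forall e, 0 < e <= 2^-1 -> f e = g e) -> cvs g a -> cvs f a.
Proof. by move=> fg [K H]; exists K => e he; rewrite fg //; apply: H. Qed.

Lemma cvs_cst a : cvs (fun _ => a) a.
Proof. by exists 0 => e he; rewrite subrr normr0 mul0r. Qed.

Lemma cvs_id : cvs (fun e => e) 0.
Proof. by exists 1 => e /andP[e0 _]; rewrite subr0 mul1r gtr0_norm. Qed.

Lemma cvs_bnd {f : R -> R} {a : R} : cvs f a -> exists B, forall e, 0 < e <= 2^-1 -> `|f e| <= B.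
Proof.
move=> [K H]; exists (`|a| + `|K|) => e he.
have h1 := H e he; have h2 := ler_norm K; case/andP: he => e0 e1.
have : `|f e| <= `|f e - a| + `|a|.
  by rewrite -[X in `|X| <= _](_ : (f e - a) + a = _); [apply: ler_normD|ring].
have h3 := normr_ge0 K.
have : K * e <= `|K| by nra.
lra.
Qed.

Lemma cvs_add {f g : R -> R} {a b : R} : cvs f a -> cvs g b -> cvs (fun e => f e + g e) (a + b).
Proof.
move=> [K1 H1] [K2 H2]; exists (K1 + K2) => e he.
have := H1 e he; have := H2 e he.
have : `|f e + g e - (a + b)| <= `|f e - a| + `|g e - b|.
  by rewrite -[X in `|X| <= _](_ : (f e - a) + (g e - b) = _); [apply: ler_normD|ring].
lra.
Qed.

Lemma cvs_opp {f : R -> R} {a : R} : cvs f a -> cvs (fun e => - f e) (- a).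
Proof. by move=> [K H]; exists K => e he; rewrite -opprD normrN; apply: H. Qed.

Lemma cvs_mul {f g : R -> R} {a b : R} : cvs f a -> cvs g b -> cvs (fun e => f e * g e) (a * b).
Proof.
move=> [K1 H1] [K2 H2]; exists (K1 * (`|b| + `|K2|) + `|a| * K2) => e he.
have h1 := H1 e he; have h2 := H2 e he.
have n2 := ler_norm K2; have n2' := normr_ge0 K2; case/andP: he => e0 e1.
have t1 : `|f e * g e - a * b| <= `|f e - a| * `|g e| + `|a| * `|g e - b|.
  rewrite -!normrM.
  by rewrite -[X in `|X| <= _](_ : (f e - a) * g e + a * (g e - b) = _); [apply: ler_normD|ring].
have t2 : `|g e| <= `|g e - b| + `|b|.
  by rewrite -[X in `|X| <= _](_ : (g e - b) + b = _); [apply: ler_normD|ring].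
have hK2 : K2 * e <= `|K2| by nra.
have hG : `|g e| <= `|b| + `|K2| by lra.
have hu : `|f e - a| * `|g e| <= (K1 * e) * (`|b| + `|K2|).
  by apply: ler_pM => //; apply: normr_ge0.
have hw : `|a| * `|g e - b| <= `|a| * (K2 * e) by apply: ler_wpM2l => //; apply: normr_ge0.
lra.
Qed.

Lemma cvs_inv {f : R -> R} {a c : R} : 0 < c -> (forall e, 0 < e <= 2^-1 -> c <= f e) ->
  c <= a -> cvs f a -> cvs (fun e => (f e)^-1) a^-1.
Proof.
move=> c0 fc ac [K H]; exists (K / (c * c)) => e he.
have h1 := H e he; have h2 := fc e he.
have fe0 : 0 < f e by lra.
have a0 : 0 < a by lra.
have eq : ((f e)^-1 - a^-1) * (f e * a) = - (f e - a) by field; rewrite ?gt_eqF.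
have eqn : `|(f e)^-1 - a^-1| * (f e * a) = `|f e - a|.
  by rewrite -(gtr0_norm (mulr_gt0 fe0 a0)) -normrM eq normrN.
have cc : c * c <= f e * a by apply: ler_pM => //; apply: ltW.
have t : `|(f e)^-1 - a^-1| * (c * c) <= K * e.
  by apply: le_trans h1; rewrite -eqn; apply: ler_wpM2l => //; apply: normr_ge0.
by rewrite mulrAC ler_pdivlMr // mulr_gt0.
Qed.

Lemma cvs_sum (I : Type) (s : seq I) (F : I -> R -> R) (a : I -> R) :
  (forall i, cvs (F i) (a i)) -> cvs (fun e => \sum_(i <- s) F i e) (\sum_(i <- s) a i).
Proof.
move=> H; elim: s => [|j s IH].
  by rewrite big_nil; apply: (cvs_ext _ (cvs_cst 0)) => e _; rewrite big_nil.
by rewrite big_cons; apply: (cvs_ext _ (cvs_add (H j) IH)) => e _; rewrite big_cons.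
Qed.

Lemma cvs_scal (k : R) {f : R -> R} {a : R} : cvs f a -> cvs (fun e => k * f e) (k * a).
Proof. by move=> h; apply: (cvs_mul (cvs_cst k) h). Qed.

Lemma inv_le {a c : R} : 0 < c -> c <= a -> a^-1 <= c^-1.
Proof. by move=> c0 ca; rewrite lef_pV2 ?posrE //; lra. Qed.

Definition UB (F : R -> V -> R) := exists K, forall e : R, 0 < e <= 1 -> forall x,
  differentiable (F e) x /\ `|F e x| <= K /\ forall i, `|pd i (F e) x| <= K.

Lemma UB_K0 {F K} : (forall e : R, 0 < e <= 1 -> forall x,
  differentiable (F e) x /\ `|F e x| <= K /\ forall i, `|pd i (F e) x| <= K) -> 0 <= K.
Proof.
move=> H; have := H 1; rewrite ltr01 lexx => /(_ isT 0) [_ [h _]].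
exact: le_trans (normr_ge0 _) h.
Qed.

Lemma UB_ext {F G : R -> V -> R} : (forall e : R, 0 < e <= 1 -> forall y, F e y = G e y) -> UB G -> UB F.
Proof.
move=> FG [K H]; exists K => e he x.
have -> : F e = G e by apply/funext => y; apply: FG.
exact: H.
Qed.

Lemma UB_add {F G : R -> V -> R} : UB F -> UB G -> UB (fun e y => F e y + G e y).
Proof.
move=> [K1 H1] [K2 H2]; exists (K1 + K2) => e he x.
have [d1 [b1 p1]] := H1 e he x; have [d2 [b2 p2]] := H2 e he x.
split; first exact: dfD.
split; first by apply: le_trans (ler_normD _ _) _; lra.
move=> i; rewrite pd_add //; have := p1 i; have := p2 i.
have := ler_normD (pd i (F e) x) (pd i (G e) x); lra.
Qed.

Lemma UB_mul {F G : R -> V -> R} : UB F -> UB G -> UB (fun e y => F e y * G e y).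
Proof.
move=> [K1 H1] [K2 H2]; have k1 := UB_K0 H1; have k2 := UB_K0 H2.
exists (K1 * K2 + K2 * K1) => e he x.
have [d1 [b1 p1]] := H1 e he x; have [d2 [b2 p2]] := H2 e he x.
split; first exact: dfM.
split.
  rewrite normrM; have : `|F e x| * `|G e x| <= K1 * K2 by apply: ler_pM.
  have : 0 <= K2 * K1 by apply: mulr_ge0. lra.
move=> i; rewrite pd_mul //.
apply: le_trans (ler_normD _ _) _; rewrite !normrM.
have : `|F e x| * `|pd i (G e) x| <= K1 * K2 by apply: ler_pM.
have : `|G e x| * `|pd i (F e) x| <= K2 * K1 by apply: ler_pM.
lra.
Qed.

Lemma UB_inv {F : R -> V -> R} {c : R} : 0 < c ->
  (forall e : R, 0 < e <= 1 -> forall y, c <= F e y) -> UB F -> UB (fun e y => (F e y)^-1).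
Proof.
move=> c0 Fc [K1 H1]; have k1 := UB_K0 H1.
exists (c^-1 + K1 / (c * c)) => e he x.
have [d1 [b1 p1]] := H1 e he x; have fc := Fc e he x.
have f0 : 0 < F e x by lra.
have ci : 0 <= c^-1 by rewrite invr_ge0; apply: ltW.
have cci : 0 <= K1 / (c * c) by rewrite divr_ge0 // mulr_ge0 //; apply: ltW.
split; first by apply: dfV => //; rewrite gt_eqF.
split.
  rewrite gtr0_norm ?invr_gt0 //; have := inv_le c0 fc; lra.
move=> i; rewrite pd_inv ?gt_eqF // normrM normrN normfV normrX gtr0_norm //.
have h1 : (F e x ^+ 2)^-1 <= (c * c)^-1 by apply: inv_le; rewrite ?mulr_gt0 // expr2; apply: ler_pM; lra.
have : (F e x ^+ 2)^-1 * `|pd i (F e) x| <= (c * c)^-1 * K1.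
  by apply: ler_pM => //; rewrite invr_ge0 exprn_ge0 //; apply: ltW.
rewrite mulrC [(c * c)^-1 * _]mulrC; lra.
Qed.

Lemma UB_cstf (k : R -> R) : (exists K, forall e : R, 0 < e <= 1 -> `|k e| <= K) ->
  UB (fun e (_ : V) => k e).
Proof.
move=> [K H]; have K0 : 0 <= K by apply: le_trans (normr_ge0 _) (H 1 _); rewrite ltr01 lexx.
exists K => e he x; split; first exact: dfC.
by split; [exact: H | move=> i; rewrite pd_cst normr0].
Qed.

Lemma UB_C2b (F : R -> V -> R) : (exists C, forall e : R, 0 < e <= 1 -> C2b C (F e)) -> UB F.
Proof.
move=> [C H]; exists C => e he x; have [b [df hi]] := H e he x.
by split => //; split => // i; case: (hi i).
Qed.

Lemma UB_pd (F : R -> V -> R) i : (exists C, forall e : R, 0 < e <= 1 -> C2b C (F e)) ->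
  UB (fun e => pd i (F e)).
Proof.
move=> [C H]; exists C => e he x; have [b [df hi]] := H e he x.
by case: (hi i) => a [b' c']; split => //; split => // j.
Qed.

Definition CV (F : R -> V -> R) (g : V -> R) := UB (fun _ => g) /\
  exists H, UB H /\ forall e : R, 0 < e <= 1 -> forall y, F e y = g y + e * H e y.

Lemma UB_e : UB (fun e (_ : V) => e).
Proof. by apply: UB_cstf; exists 1 => e /andP[e0 e1]; rewrite gtr0_norm. Qed.

Lemma CV_UB {F g} : CV F g -> UB F.
Proof.
move=> [hg [H [hH eq]]]; apply: (UB_ext eq).
exact: (UB_add hg (UB_mul UB_e hH)).
Qed.

Lemma CV_ext {F G g} : (forall e : R, 0 < e <= 1 -> forall y, F e y = G e y) -> CV G g -> CV F g.
Proof.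
move=> FG [hg [H [hH eq]]]; split => //; exists H; split => // e he y.
by rewrite FG // eq.
Qed.

Lemma CV_cst {g} : UB (fun _ => g) -> CV (fun _ => g) g.
Proof.
move=> hg; split => //; exists (fun _ _ => 0); split; last by move=> e _ y; rewrite mulr0 addr0.
by apply: UB_cstf; exists 0 => e _; rewrite normr0.
Qed.

Lemma CV_add {F G f g} : CV F f -> CV G g -> CV (fun e y => F e y + G e y) (fun y => f y + g y).
Proof.
move=> [hf [H [hH eH]]] [hg [K [hK eK]]]; split; first exact: (UB_add hf hg).
exists (fun e y => H e y + K e y); split; first exact: UB_add.
by move=> e he y; rewrite eH // eK //; ring.
Qed.

Lemma CV_mul {F G f g} : CV F f -> CV G g -> CV (fun e y => F e y * G e y) (fun y => f y * g y).
Proof.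
move=> [hf [H [hH eH]]] [hg [K [hK eK]]]; split; first exact: (UB_mul hf hg).
exists (fun e y => H e y * g y + f y * K e y + e * (H e y * K e y)); split.
  exact: (UB_add (UB_add (UB_mul hH hg) (UB_mul hf hK)) (UB_mul UB_e (UB_mul hH hK))).
by move=> e he y; rewrite eH // eK //; ring.
Qed.

Lemma CV_inv {F f c} : 0 < c -> (forall e : R, 0 < e <= 1 -> forall y, c <= F e y) ->
  (forall y, c <= f y) -> CV F f -> CV (fun e y => (F e y)^-1) (fun y => (f y)^-1).
Proof.
move=> c0 Fc fc hF; have hFU := CV_UB hF; case: hF => [hf [H [hH eH]]].
split; first by apply: (UB_inv c0) => // e _ y.
exists (fun e y => - H e y * ((F e y)^-1 * (f y)^-1)); split.
  apply: (UB_ext (G := fun e y => ((fun _ : R => -1) e * H e y) * ((F e y)^-1 * (f y)^-1))).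
    by move=> e _ y; rewrite mulN1r.
  apply: UB_mul; first apply: UB_mul => //.
    by apply: UB_cstf; exists 1 => e _; rewrite normrN normr1.
  apply: UB_mul; first exact: (UB_inv c0 Fc hFU).
  by apply: (UB_inv (F := fun _ => f) c0) => // e _ y.
move=> e he y; have := Fc e he y; have := fc y => h1 h2.
have F0 : F e y != 0 by rewrite gt_eqF //; lra.
have f0 : f y != 0 by rewrite gt_eqF //; lra.
have eq : e * H e y = F e y - f y by rewrite eH //; ring.
rewrite (_ : e * (- H e y * ((F e y)^-1 * (f y)^-1)) = - (e * H e y) * ((F e y)^-1 * (f y)^-1)); last by ring.
rewrite eq; field.
by rewrite F0 f0.
Qed.

Lemma one_in : 0 < (1 : R) <= 1.
Proof. by rewrite (@ltr01 R) lexx. Qed.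

Lemma half1 {e : R} : 0 < e <= 2^-1 -> 0 < e <= 1.
Proof. by case/andP => e0 e1; apply/andP; split => //; lra. Qed.

Lemma CV_pt {F g} : CV F g -> forall x, cvs (fun e => F e x) (g x).
Proof.
move=> [hg [H [[K hH] eq]]] x; exists K => e he.
have he1 := half1 he; have [_ [b _]] := hH e he1 x.
rewrite eq // (_ : g x + e * H e x - g x = e * H e x); last by ring.
case/andP: he => e0 _.
by rewrite normrM gtr0_norm // mulrC ler_wpM2r // ltW.
Qed.

Lemma CV_pd {F g} i : CV F g -> forall x, cvs (fun e => pd i (F e) x) (pd i g x).
Proof.
move=> [[Kg hg] [H [[K hH] eq]]] x; exists K => e he.
have he1 := half1 he; have [dH [_ b]] := hH e he1 x.
have [dg _] := hg 1 one_in x.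
have -> : F e = fun y => g y + e * H e y by apply/funext => y; rewrite eq.
rewrite pd_add //; last by apply: dfM => //; apply: dfC.
rewrite pd_scal // (_ : pd i g x + e * pd i (H e) x - pd i g x = e * pd i (H e) x); last by ring.
case/andP: he => e0 _.
by rewrite normrM gtr0_norm // mulrC ler_wpM2r // ltW.
Qed.

Lemma UB_c (g : V -> R) : (exists C, C2b C g) -> UB (fun _ => g).
Proof. by move=> [C h]; apply: UB_C2b; exists C => e _. Qed.

Lemma UB_e2 : UB (fun e (_ : V) => e ^+ 2).
Proof.
apply: UB_cstf; exists 1 => e /andP[e0 e1].
rewrite gtr0_norm ?exprn_gt0 // expr2; nra.
Qed.

Lemma CV_expands {F c} : expands F c -> CV F (c 0%N).
Proof.
move=> [[C hc] [r [C' hr]]].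
have hk k : (k <= 2)%N -> UB (fun _ => c k) by move=> hk; apply: UB_c; exists C; apply: hc.
split; first exact: hk.
exists (fun e y => c 1%N y + e * c 2%N y + e ^+ 2 * r e y); split.
  apply: UB_add; first apply: UB_add; first exact: hk.
    exact: (UB_mul UB_e (hk 2%N isT)).
  apply: (UB_mul UB_e2); apply: UB_C2b; exists C' => e he; exact: (hr e he).1.
by move=> e he y; rewrite (hr e he).2; ring.
Qed.

Lemma pinf_bnd {p : V -> R} {a b : R} : (forall y, `|p y - a| <= b) -> `|pinf p - a| <= b.
Proof.
move=> H; rewrite /pinf.
have lb : lbound (range p) (a - b).
  move=> z [y _ <-]; have := H y; rewrite ler_norml; lra.
have ne : (range p !=set0)%classic by exists (p 0), 0.
have h1 := lb_le_inf ne lb.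
have h2 : inf (range p) <= p 0 by apply: ge_inf; [exists (a - b) | exists 0].
have := H 0; rewrite !ler_norml; lra.
Qed.

Lemma CV_pinf {F a} : CV F (fun _ => a) -> CV (fun e (_ : V) => pinf (F e)) (fun _ => a).
Proof.
move=> [hg [H [[K hH] eq]]]; split => //.
exists (fun e (_ : V) => (pinf (F e) - a) / e); split.
  apply: UB_cstf; exists K => e he; have /andP[e0 e1] := he.
  have hb : forall y, `|F e y - a| <= e * K.
    move=> y; have [_ [b _]] := hH e he y.
    rewrite eq // (_ : a + e * H e y - a = e * H e y); last by ring.
    by rewrite normrM gtr0_norm // ler_wpM2l // ltW.
  have := pinf_bnd hb.
  by rewrite normrM normfV (gtr0_norm e0) ler_pdivrMr // mulrC.
move=> e /andP[e0 _] y; field; exact: lt0r_neq0.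
Qed.

Lemma pd0_der {f : V -> R} {a : V} (v : V) : differentiable f a -> (forall i, pd i f a = 0) ->
  derive f a v = 0.
Proof.
move=> df h0; rewrite deriveE // [v]row_sum_delta linear_sum big1 // => j _.
rewrite linearZ /= -deriveE //; have := h0 j; rewrite /pd /ev => ->.
by rewrite scaler0.
Qed.

Lemma pd0_cst (f : V -> R) : (forall x, differentiable f x) -> (forall i x, pd i f x = 0) ->
  forall x, f x = f 0.
Proof.
move=> df h0 x.
pose g := fun t : R => f (t *: x).
have E t : (fun h : R => h^-1 *: ((g \o shift t) (h *: 1) - g t)) =
           (fun h : R => h^-1 *: ((f \o shift (t *: x)) (h *: x) - f (t *: x))).
  apply/funext => h /=; rewrite /g; congr (_ *: (f _ - _)).
  by rewrite scalerDl (_ : h *: (1 : R) = h) //; exact: mulr1.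
have dg t : derivable g t 1.
  by rewrite /derivable E; exact: (diff_derivable (v := x) (df (t *: x))).
have Dg (t : R) : is_derive t 1 g 0.
  apply: DeriveDef; first exact: dg. rewrite /derive E.
  exact: (pd0_der x (df (t *: x)) (fun i => h0 i _)).
have cg : {within `[0, 1], continuous g}%classic.
  apply: continuous_subspaceT => t.
  exact/differentiable_continuous/(derivable1_diffP g t).1.
have [c _ hc] := MVT_segment ler01 (fun t _ => Dg t) cg.
move: hc; rewrite mul0r /g scale1r scale0r => /eqP; rewrite subr_eq0 => /eqP.
done.
Qed.

Definition bnd (f : R -> R) := exists B, forall e : R, 0 < e <= 2^-1 -> `|f e| <= B.

Lemma bnd_cvs {f : R -> R} {a : R} : cvs f a -> bnd f.
Proof. exact: cvs_bnd. Qed.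

Lemma bnd_cst (k : R) : bnd (fun _ => k).
Proof. by exists `|k|. Qed.

Lemma bnd_id : bnd (fun e => e).
Proof. exact: (bnd_cvs cvs_id). Qed.

Lemma bnd_add {f g : R -> R} : bnd f -> bnd g -> bnd (fun e => f e + g e).
Proof.
move=> [B1 H1] [B2 H2]; exists (B1 + B2) => e he.
by apply: le_trans (ler_normD _ _) _; apply: lerD; [exact: H1|exact: H2].
Qed.

Lemma bnd_mul {f g : R -> R} : bnd f -> bnd g -> bnd (fun e => f e * g e).
Proof.
move=> [B1 H1] [B2 H2]; exists (B1 * B2) => e he.
by rewrite normrM; apply: ler_pM; rewrite ?normr_ge0 //; [exact: H1|exact: H2].
Qed.

Lemma bnd_opp {f : R -> R} : bnd f -> bnd (fun e => - f e).
Proof. by move=> [B H]; exists B => e he; rewrite normrN; apply: H. Qed.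

Lemma bnd_inv {f : R -> R} {c : R} : 0 < c -> (forall e : R, 0 < e <= 2^-1 -> c <= f e) -> bnd (fun e => (f e)^-1).
Proof.
move=> c0 fc; exists c^-1 => e he; have h := fc e he.
by rewrite gtr0_norm ?invr_gt0; [apply: inv_le| lra].
Qed.

Lemma bnd_sum (I : Type) (s : seq I) (F : I -> R -> R) :
  (forall i, bnd (F i)) -> bnd (fun e => \sum_(i <- s) F i e).
Proof.
move=> H; elim: s => [|j s [B IH]].
  by exists 0 => e _; rewrite big_nil normr0.
have [B1 H1] := H j; exists (B1 + B) => e he; rewrite big_cons.
by apply: le_trans (ler_normD _ _) _; apply: lerD; [exact: H1|exact: IH].
Qed.

Lemma cvs_ebnd {g : R -> R} : bnd g -> cvs (fun e => e * g e) 0.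
Proof.
move=> [B H]; exists B => e he; have h := H e he; case/andP: he => e0 _.
by rewrite subr0 normrM gtr0_norm // mulrC ler_wpM2r // ltW.
Qed.

Lemma UB_bnd {F} x : UB F -> bnd (fun e => F e x).
Proof. by move=> [K H]; exists K => e he; have [_ [h _]] := H e (half1 he) x. Qed.

Lemma UB_bndpd {F} i x : UB F -> bnd (fun e => pd i (F e) x).
Proof. by move=> [K H]; exists K => e he; have [_ [_ h]] := H e (half1 he) x. Qed.

Lemma UB_diff {g : V -> R} x : UB (fun _ => g) -> differentiable g x.
Proof. by move=> [K H]; have [h _] := H 1 one_in x. Qed.

Lemma cvs_ge {f : R -> R} {a c : R} : cvs f a -> (forall e : R, 0 < e <= 2^-1 -> c <= f e) -> c <= a.
Proof.
move=> [K H] fc; case: (lerP c a) => // ac; exfalso.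
suff : c - a = 0 by lra.
apply: (@small0 _ K) => e he; have h1 := H e he; have h2 := fc e he.
rewrite gtr0_norm ?subr_gt0 //; have h3 := ler_norm (f e - a); lra.
Qed.

Lemma poly_small (a0 a1 M : R) : (forall e : R, 0 < e <= 2^-1 -> `|a0 + e * a1| <= M * e ^+ 2) ->
  a0 = 0 /\ a1 = 0.
Proof.
move=> H.
have M0 : 0 <= M.
  have := H 2^-1; rewrite invr_gt0 ltr0n lexx /= => /(_ isT) h.
  have h' := normr_ge0 (a0 + 2^-1 * a1).
  have : 0 <= M * 2^-1 ^+ 2 by lra.
  by rewrite pmulr_lge0 // exprn_gt0 // invr_gt0 ltr0n.
have a00 : a0 = 0.
  apply: (@small0 _ (M + `|a1|)) => e he; have h := H e he; case/andP: he => e0 e1.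
  have t : `|a0| <= `|a0 + e * a1| + `|e * a1|.
    by rewrite -[X in `|X| <= _](_ : (a0 + e * a1) + - (e * a1) = _); [rewrite -(normrN (e * a1)); apply: ler_normD|ring].
  move: t; rewrite normrM gtr0_norm // => t.
  have : M * e ^+ 2 <= M * e by rewrite ler_wpM2l // expr2 ger_pMl //; lra.
  lra.
split => //; move: H; rewrite a00 => H.
apply: (@small0 _ M) => e he; have h := H e he; case/andP: he => e0 e1.
move: h; rewrite add0r normrM gtr0_norm // => h.
rewrite -(ler_pM2l e0); have -> : e * (M * e) = M * e ^+ 2 by ring.
exact: h.
Qed.

Lemma step1_alg (a0 a1 a2 dt B1 B2 Cp Cr : R) (P a3 mh m1v : R -> R) : 0 < dt -> `|a2| <= Cp ->
  (forall e : R, 0 < e <= 2^-1 -> `|a3 e| <= Cr /\ `|mh e| <= B1 /\ `|m1v e| <= B2 /\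
     (1 - e ^+ 2) * dt * P e = e ^+ 2 * (mh e - m1v e) /\
     P e = a0 + e * a1 + e ^+ 2 * a2 + e ^+ 3 * a3 e) -> a0 = 0 /\ a1 = 0.
Proof.
move=> dt0 ha2 H.
apply: (@poly_small _ _ (2 * (B1 + B2) / dt + Cp + Cr)) => e he.
have [h3 [hmh [hm1 [heq hP]]]] := H e he; case/andP: he => e0 e1.
have e2 : 0 < e ^+ 2 by rewrite exprn_gt0.
have e2b : e ^+ 2 <= 4^-1.
  rewrite expr2 (_ : 4^-1 = 2^-1 * 2^-1 :> R); last by field.
  by apply: ler_pM => //; apply: ltW.
have w0 : dt / 2 <= (1 - e ^+ 2) * dt by nra.
have q : `|P e| * ((1 - e ^+ 2) * dt) <= e ^+ 2 * (B1 + B2).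
  rewrite -(ger0_norm (_ : 0 <= (1 - e ^+ 2) * dt)); last by nra.
  rewrite -normrM mulrC heq normrM (gtr0_norm e2) ler_pM2l //.
  apply: le_trans (ler_normB _ _) _; lra.
have q2 : `|P e| * dt <= 2 * (e ^+ 2 * (B1 + B2)).
  have := normr_ge0 (P e); nra.
have q3 : `|P e| <= 2 * (B1 + B2) / dt * e ^+ 2.
  by rewrite mulrAC ler_pdivlMr //; nra.
have t : `|a0 + e * a1| <= `|P e| + e ^+ 2 * `|a2| + e ^+ 3 * `|a3 e|.
  have -> : a0 + e * a1 = P e - e ^+ 2 * a2 - e ^+ 3 * a3 e by rewrite hP; ring.
  apply: le_trans (ler_normB _ _) _; rewrite normrM (gtr0_norm (exprn_gt0 3 e0)).
  apply: lerD => //; apply: le_trans (ler_normB _ _) _; rewrite normrM (gtr0_norm e2) //.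
have t2 : e ^+ 2 * `|a2| <= e ^+ 2 * Cp by rewrite ler_wpM2l // ltW.
have t3 : e ^+ 3 * `|a3 e| <= e ^+ 2 * Cr.
  have hC : 0 <= Cr by apply: le_trans h3; apply: normr_ge0.
  rewrite exprSr -mulrA ler_wpM2l ?(ltW e2) //.
  apply: le_trans (_ : 1 * Cr <= Cr); last by rewrite mul1r.
  by apply: ler_pM; rewrite ?normr_ge0 //; lra.
lra.
Qed.

Lemma dfZ (k : R) {f x} : differentiable f x -> differentiable (fun y => k * f y) x.
Proof. by move=> df; apply: dfM => //; apply: dfC. Qed.

Lemma pd_poly3 (f0 f1 f2 f3 : V -> R) (e : R) i x : differentiable f0 x -> differentiable f1 x ->
  differentiable f2 x -> differentiable f3 x ->
  pd i (fun y => f0 y + e * f1 y + e ^+ 2 * f2 y + e ^+ 3 * f3 y) x =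
  pd i f0 x + e * pd i f1 x + e ^+ 2 * pd i f2 x + e ^+ 3 * pd i f3 x.
Proof.
move=> d0 d1 d2 d3.
have D1 := dfZ e d1; have D2 := dfZ (e ^+ 2) d2; have D3 := dfZ (e ^+ 3) d3.
have S1 := dfD d0 D1; have S2 := dfD S1 D2.
rewrite (pd_add i S2 D3) (pd_add i S1 D2) (pd_add i d0 D1).
by rewrite !pd_scal.
Qed.

Lemma cvs_eqa {f : R -> R} {a b : R} : cvs f a -> a = b -> cvs f b.
Proof. by move=> h <-. Qed.

Lemma cvs_1e2 : cvs (fun e => 1 - e ^+ 2) 1.
Proof.
apply: (cvs_eqa (cvs_ext _ (cvs_add (cvs_cst 1) (cvs_opp (cvs_mul cvs_id cvs_id))))).
  by move=> e _; rewrite expr2.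
by rewrite mul0r oppr0 addr0.
Qed.

Lemma bnd_ext {f g : R -> R} : (forall e : R, 0 < e <= 2^-1 -> f e = g e) -> bnd g -> bnd f.
Proof. by move=> fg [B H]; exists B => e he; rewrite fg //; apply: H. Qed.

Lemma bnd_sq {f : R -> R} : bnd f -> bnd (fun e => f e ^+ 2).
Proof. by move=> h; apply: (bnd_ext _ (bnd_mul h h)) => e _; rewrite expr2. Qed.

Lemma UB_1e2 : UB (fun e (_ : V) => 1 - e ^+ 2).
Proof.
apply: UB_cstf; exists 1 => e /andP[e0 e1].
have h1 : 0 <= e ^+ 2 by rewrite exprn_ge0 // ltW.
have h2 : e ^+ 2 <= 1 by rewrite expr2; nra.
rewrite ler_norml; lra.
Qed.

Lemma CV_e2 : CV (fun e (_ : V) => e ^+ 2) (fun _ => 0).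
Proof.
split; first by apply: UB_cstf; exists 0 => e _; rewrite normr0.
by exists (fun e _ => e); split; [exact: UB_e | move=> e _ y; rewrite add0r expr2].
Qed.

Lemma CV_1e2 : CV (fun e (_ : V) => 1 - e ^+ 2) (fun _ => 1).
Proof.
split; first by apply: UB_cstf; exists 1 => e _; rewrite normr1.
exists (fun e _ => - e); split; last by move=> e _ y; rewrite expr2; ring.
by apply: UB_cstf; exists 1 => e /andP[e0 e1]; rewrite normrN gtr0_norm.
Qed.

Lemma UB_dif {F : R -> V -> R} {e : R} x : UB F -> 0 < e <= 1 -> differentiable (F e) x.
Proof. by move=> [K H] he; have [h _] := H e he x. Qed.
End Aux.

Theorem theorem3p5 (R : realType) (d : nat) (gam dt : R)
  (rho : R -> 'rV[R]_d -> R) (m : 'I_d -> R -> 'rV[R]_d -> R) (E : R -> 'rV[R]_d -> R)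
  (rho1 : R -> 'rV[R]_d -> R) (m1 : 'I_d -> R -> 'rV[R]_d -> R) (p1 : R -> 'rV[R]_d -> R)
  (rc : nat -> 'rV[R]_d -> R) (mc : 'I_d -> nat -> 'rV[R]_d -> R)
  (Ec pnc : nat -> 'rV[R]_d -> R)
  (r1c : nat -> 'rV[R]_d -> R) (m1c : 'I_d -> nat -> 'rV[R]_d -> R)
  (pc : nat -> 'rV[R]_d -> R) (P0 : R) :
  1 < gam -> 0 < dt ->
  (exists c : R, 0 < c /\ forall e x, 0 < e <= 1 -> c <= rho e x /\ c <= rho1 e x) ->
  (forall e, 0 < e <= 1 -> scheme gam dt rho m E rho1 m1 p1 e) ->
  expands rho rc -> (forall i, expands (m i) (mc i)) -> expands E Ec ->
  expands (pres_n gam rho m E) pnc ->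
  expands rho1 r1c -> (forall i, expands (m1 i) (m1c i)) -> expands p1 pc ->
  (forall x, pnc 0%N x = P0) ->
  (exists Q0 Q1 : R, forall x, pc 0%N x = Q0 /\ pc 1%N x = Q1) /\
  forall x,
    r1c 0%N x = rc 0%N x - dt * \sum_(i < d) pd i (mc i 0%N) x /\
    (forall i, m1c i 0%N x = mc i 0%N x
        - dt * \sum_(j < d) pd j (fun y => mc i 0%N y * mc j 0%N y / rc 0%N y) x
        - dt * pd i (pc 2%N) x) /\
    gam * P0 * \sum_(i < d) pd i (fun y => mc i 0%N y / rc 0%N y) x
      = - (pc 0%N x - P0) / dt.
Proof.
move=> hg hdt [c [c0 hc]] hs hrho hm hE hpn hr1 hm1 hp hP0.
have g1 : gam - 1 != 0 by rewrite subr_eq0 gt_eqF.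
have dt0 : dt != 0 by rewrite gt_eqF.
have CVrho := CV_expands hrho.
have CVm i := CV_expands (hm i).
have CVE := CV_expands hE.
have CVpn : CV (pres_n gam rho m E) (fun _ => P0).
  have := CV_expands hpn.
  by have -> : pnc 0%N = fun _ => P0 by apply/funext => y; rewrite hP0.
have CVr1 := CV_expands hr1.
have CVm1 i := CV_expands (hm1 i).
have CVp := CV_expands hp.
case: hp => [[Cp hpc] [rp [Cr hrp]]].
have hrc0 y : c <= rc 0%N y := cvs_ge (CV_pt CVrho y) (fun e he => (hc e y (half1 he)).1).
pose G i j := fun y => mc i 0%N y * (mc j 0%N y * (rc 0%N y)^-1) + (if i == j then P0 else 0).
have CVA i j : CV (fun e y => m i e y * (m j e y * (rho e y)^-1))
    (fun y => mc i 0%N y * (mc j 0%N y * (rc 0%N y)^-1)).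
  exact: (CV_mul (CVm i) (CV_mul (CVm j) (CV_inv c0 (fun e he y => (hc e y he).1) hrc0 CVrho))).
have CVF i j : CV (fun e y => m i e y * vel rho m j e y +
     (if i == j then pres_n gam rho m E e y else 0)) (G i j).
  rewrite /vel /G; apply: CV_add; first exact: CVA.
  case: (i == j); first exact: CVpn.
  by apply: CV_cst; apply: UB_cstf; exists 0 => e _; rewrite normr0.
have cvmhat i x : cvs (fun e => mhat gam dt rho m E i e x)
    (mc i 0%N x - dt * \sum_(j < d) pd j (G i j) x).
  apply: (cvs_ext _ (cvs_add (CV_pt (CVm i) x) (cvs_opp (cvs_scal dt
    (cvs_sum _ (index_enum _) _ _ (fun j => CV_pd j (CVF i j) x)))))).
  by move=> e he; rewrite /mhat.
have hpd01 i x : pd i (pc 0%N) x = 0 /\ pd i (pc 1%N) x = 0.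
  have [B1 hB1] := cvs_bnd (cvmhat i x).
  have [B2 hB2] := cvs_bnd (CV_pt (CVm1 i) x).
  apply: (@step1_alg _ _ _ (pd i (pc 2%N) x) dt B1 B2 Cp Cr (fun e => pd i (p1 e) x)
     (fun e => pd i (rp e) x) (fun e => mhat gam dt rho m E i e x) (fun e => m1 i e x)) => //.
    by have [_ [_ h]] := hpc 2%N isT x; case: (h i).
  move=> e he; have he1 := half1 he; have /andP[e0 _] := he.
  split; first by have [_ [_ h]] := (hrp e he1).1 x; case: (h i).
  split; first exact: hB1.
  split; first exact: hB2.
  split.
    have [_ [h _]] := hs e he1 x; rewrite (h i); field; exact: lt0r_neq0.
  have -> : p1 e = fun y => pc 0%N y + e * pc 1%N y + e ^+ 2 * pc 2%N y + e ^+ 3 * rp e y.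
    by apply/funext => y; rewrite (hrp e he1).2.
  apply: pd_poly3; [exact: (hpc 0%N isT x).2.1 | exact: (hpc 1%N isT x).2.1 |
     exact: (hpc 2%N isT x).2.1 | exact: ((hrp e he1).1 x).2.1].
have dpc k : (k <= 2)%N -> forall x, differentiable (pc k) x.
  by move=> hk x; exact: (hpc k hk x).2.1.
have cst0 := pd0_cst _ (dpc 0%N isT) (fun i x => (hpd01 i x).1).
have cst1 := pd0_cst _ (dpc 1%N isT) (fun i x => (hpd01 i x).2).
split; first by exists (pc 0%N 0), (pc 1%N 0) => x; rewrite cst0 cst1.
set Q0 := pc 0%N 0; set Q1 := pc 1%N 0.
have hp1 e y : 0 < e <= 1 -> p1 e y = Q0 + e * Q1 + e ^+ 2 * (pc 2%N y + e * rp e y).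
  by move=> he; rewrite (hrp e he).2 (cst0 y) (cst1 y); rewrite -/Q0 -/Q1; ring.
pose D i := fun e y => pd i (pc 2%N) y + e * pd i (rp e) y.
have hpdp1 e i y : 0 < e <= 1 -> pd i (p1 e) y = e ^+ 2 * D i e y.
  move=> he.
  have -> : p1 e = fun y => pc 0%N y + e * pc 1%N y + e ^+ 2 * pc 2%N y + e ^+ 3 * rp e y.
    by apply/funext => z; rewrite (hrp e he).2.
  rewrite pd_poly3; [|exact: (hpc 0%N isT y).2.1 | exact: (hpc 1%N isT y).2.1 |
     exact: (hpc 2%N isT y).2.1 | exact: ((hrp e he).1 y).2.1].
  by rewrite (hpd01 i y).1 (hpd01 i y).2 /D; ring.
have UBpc2 i : UB (fun _ => pd i (pc 2%N)).
  by apply: (UB_pd (fun _ => pc 2%N)); exists Cp => e _; exact: hpc.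
have UBrp i : UB (fun e => pd i (rp e)).
  by apply: UB_pd; exists Cr => e he; exact: (hrp e he).1.
have CVD i : CV (D i) (pd i (pc 2%N)).
  by split => //; exists (fun e => pd i (rp e)); split.
have UBD i : UB (D i) := CV_UB (CVD i).
have hr1c e y : 0 < e <= 1 -> c <= rho1 e y by move=> he; exact: (hc e y he).2.
have hEc y : Ec 0%N y = P0 / (gam - 1).
  have Bg : bnd (fun e => - (gam - 1) * (e / 2) * (\sum_(i < d) m i e y ^+ 2) * (rho e y)^-1).
    apply: bnd_mul; last exact: (bnd_inv c0 (fun e he => (hc e y (half1 he)).1)).
    apply: bnd_mul; first exact: (bnd_mul (bnd_cst _) (bnd_mul bnd_id (bnd_cst _))).
    exact: (bnd_sum _ _ _ (fun i => bnd_sq (bnd_cvs (CV_pt (CVm i) y)))).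
  have ext : forall e, 0 < e <= 2^-1 -> pres_n gam rho m E e y = (gam - 1) * E e y +
      e * (- (gam - 1) * (e / 2) * (\sum_(i < d) m i e y ^+ 2) * (rho e y)^-1).
    move=> e he; have := (hc e y (half1 he)).1 => hr.
    rewrite /pres_n; field; rewrite gt_eqF //; lra.
  have h := cvs_uniq (CV_pt CVpn y) (cvs_ext ext (cvs_add (cvs_scal (gam - 1) (CV_pt CVE y)) (cvs_ebnd Bg))).
  by rewrite h addr0; field.
move=> x; split.
  apply: (cvs_uniq (CV_pt CVr1 x)).
  apply: (cvs_ext _ (cvs_add (CV_pt CVrho x) (cvs_opp (cvs_scal dt
     (cvs_sum _ (index_enum _) _ _ (fun i => CV_pd i (CVm i) x)))))).
  by move=> e he; exact: (hs e (half1 he) x).1.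
split.
  move=> i; apply: (cvs_uniq (CV_pt (CVm1 i) x)).
  have T := cvs_mul (cvs_mul cvs_1e2 (cvs_cst dt)) (CV_pt (CVD i) x).
  apply: (cvs_eqa (cvs_ext _ (cvs_add (cvmhat i x) (cvs_opp T)))).
    move=> e he; have he1 := half1 he; have /andP[e0 _] := he.
    have [_ [h _]] := hs e he1 x; rewrite (h i) hpdp1 //; field; exact: lt0r_neq0.
  have eqs : \sum_(j < d) pd j (G i j) x =
             \sum_(j < d) pd j (fun y => mc i 0%N y * mc j 0%N y / rc 0%N y) x.
    apply: eq_bigr => j _; rewrite /G.
    transitivity (pd j (fun y => mc i 0%N y * (mc j 0%N y * (rc 0%N y)^-1)) x +
                  pd j (fun _ : 'rV_d => if i == j then P0 else 0) x).
      exact: (pd_add j (UB_diff x (CVA i j).1) (dfC _ x)).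
    rewrite pd_cst addr0; congr pd; apply/funext => y; by rewrite mulrA.
  by rewrite eqs; ring.
have CVPi : CV (Pi_n gam rho m E) (fun _ => 0 * P0 + 1 * P0).
  exact: (CV_add (CV_mul CV_e2 CVpn) (CV_mul CV_1e2 (CV_pinf CVpn))).
have CVu j : CV (fun e y => m j e y * (rho e y)^-1) (fun y => mc j 0%N y * (rc 0%N y)^-1).
  exact: (CV_mul (CVm j) (CV_inv c0 (fun e he y => (hc e y he).1) hrc0 CVrho)).
have CVH j : CV (fun e y => (E e y + Pi_n gam rho m E e y) * vel rho m j e y)
   (fun y => (Ec 0%N y + (0 * P0 + 1 * P0)) * (mc j 0%N y * (rc 0%N y)^-1)).
  exact: (CV_mul (CV_add CVE CVPi) (CVu j)).
have hpdH j : pd j (fun y => (Ec 0%N y + (0 * P0 + 1 * P0)) * (mc j 0%N y * (rc 0%N y)^-1)) x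
   = gam * P0 / (gam - 1) * pd j (fun y => mc j 0%N y / rc 0%N y) x.
  rewrite -(pd_scal _ j (UB_diff x (CVu j).1)); congr pd; apply/funext => y.
  by rewrite hEc; congr (_ * _); field.
have cvEhat : cvs (fun e => Ehat gam dt rho m E e x) (Ec 0%N x + - (dt * \sum_(j < d)
    pd j (fun y => (Ec 0%N y + (0 * P0 + 1 * P0)) * (mc j 0%N y * (rc 0%N y)^-1)) x)).
  apply: (cvs_ext _ (cvs_add (CV_pt CVE x) (cvs_opp (cvs_scal dt
    (cvs_sum _ (index_enum _) _ _ (fun j => CV_pd j (CVH j) x)))))).
  by move=> e he; rewrite /Ehat.
pose I e := (pinf (p1 e) - Q0 - e * Q1) / e ^+ 2.
have hpinf e : 0 < e <= 1 -> pinf (p1 e) = Q0 + e * Q1 + e ^+ 2 * I e.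
  by move=> /andP[e0 _]; rewrite /I; field; rewrite gt_eqF.
have hIb : exists K, forall e, 0 < e <= 1 -> `|- I e| <= K.
  exists (Cp + Cr) => e he; have /andP[e0 e1] := he.
  have hb : forall y, `|p1 e y - (Q0 + e * Q1)| <= e ^+ 2 * (Cp + Cr).
    move=> y; rewrite hp1 // (_ : Q0 + e * Q1 + e ^+ 2 * (pc 2%N y + e * rp e y) - (Q0 + e * Q1)
        = e ^+ 2 * (pc 2%N y + e * rp e y)); last by ring.
    rewrite normrM gtr0_norm ?exprn_gt0 // ler_pM2l ?exprn_gt0 //.
    apply: le_trans (ler_normD _ _) _; apply: lerD; first exact: (hpc 2%N isT y).1.
    rewrite normrM gtr0_norm //; have := ((hrp e he).1 y).1; have := normr_ge0 (rp e y); nra.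
  have hh := pinf_bnd hb.
  rewrite normrN /I normrM normfV (gtr0_norm (exprn_gt0 2 e0)) ler_pdivrMr ?exprn_gt0 //.
  rewrite (_ : pinf (p1 e) - Q0 - e * Q1 = pinf (p1 e) - (Q0 + e * Q1)); last by ring.
  by rewrite [(Cp + Cr) * _]mulrC.
pose U i := fun e y => (m1 i e y + (1 - e ^+ 2) * dt * D i e y) * (rho1 e y)^-1.
have UBU i : UB (U i).
  apply: UB_mul; last exact: (UB_inv c0 (fun e he y => hr1c e y he) (CV_UB CVr1)).
  apply: UB_add; first exact: (CV_UB (CVm1 i)).
  apply: UB_mul; last exact: UBD.
  apply: (UB_mul UB_1e2); apply: UB_cstf; by exists `|dt|.
have huhat e i : 0 < e <= 1 -> uhat gam dt rho m E i e = U i e.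
  move=> he; have /andP[e0 _] := he; apply/funext => y.
  have [hr [hmm _]] := hs e he y.
  rewrite /uhat /U -hr; congr (_ * _).
  rewrite (hmm i) hpdp1 //; field; exact: lt0r_neq0.
pose Gi i := fun e y => (pc 2%N y + e * rp e y + - I e) * (rho1 e y)^-1 * D i e y.
have UBG i : UB (Gi i).
  apply: UB_mul; last exact: UBD.
  apply: UB_mul; last exact: (UB_inv c0 (fun e he y => hr1c e y he) (CV_UB CVr1)).
  apply: UB_add; last by apply: UB_cstf.
  apply: UB_add; first exact: (UB_c _ (ex_intro _ Cp (hpc 2%N isT))).
  apply: (UB_mul UB_e); apply: UB_C2b; exists Cr => e he; exact: (hrp e he).1.
have hF e i : 0 < e <= 1 -> (fun y => (p1 e y - pinf (p1 e)) / rhohat dt rho m e y * pd i (p1 e) y)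
    = (fun y => e ^+ 4 * Gi i e y).
  move=> he; apply/funext => y; have [hr _] := hs e he y.
  by rewrite -hr hp1 // hpinf // hpdp1 // /Gi; ring.
have hb_r1 : bnd (fun e => rho1 e x) := UB_bnd x (CV_UB CVr1).
have hb_r1i : bnd (fun e => (rho1 e x)^-1) := bnd_inv c0 (fun e he => hr1c e x (half1 he)).
have hb_D i : bnd (fun e => D i e x) := UB_bnd x (UBD i).
have hb_pU i : bnd (fun e => pd i (U i e) x) := UB_bndpd i x (UBU i).
have hb_U i : bnd (fun e => U i e x) := UB_bnd x (UBU i).
have hb_rp : bnd (fun e => rp e x).
  by apply: UB_bnd; apply: UB_C2b; exists Cr => e he; exact: (hrp e he).1.
have hb_I : bnd (fun e => - I e).
  by case: hIb => K hK; exists K => e he; apply: hK; exact: half1.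
have hb_G i : bnd (fun e => pd i (Gi i e) x) := UB_bndpd i x (UBG i).
have BL : bnd (fun e => - (1 - e ^+ 2) ^+ 2 * dt ^+ 2 * e * \sum_(i < d) pd i (Gi i e) x).
  by repeat first [exact: bnd_cst | exact: bnd_id | exact: hb_G | apply: bnd_sum => ? |
     apply: bnd_add | apply: bnd_mul | apply: bnd_opp | apply: bnd_sq].
have BR : bnd (fun e => - (1 - e ^+ 2) ^+ 2 / 2 * dt ^+ 2 * (rho1 e x)^-1 * e * \sum_(i < d) D i e x ^+ 2
   + - ((1 - e ^+ 2) * dt * e * (pc 2%N x + e * rp e x + - I e) * \sum_(i < d) pd i (U i e) x)
   + - (e / 2 * rho1 e x * \sum_(i < d) U i e x ^+ 2)).
  by repeat first [exact: bnd_cst | exact: bnd_id | exact: hb_r1 | exact: hb_r1i | exact: hb_D |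
     exact: hb_pU | exact: hb_U | exact: hb_rp | exact: hb_I | apply: bnd_sum => ? |
     apply: bnd_add | apply: bnd_mul | apply: bnd_opp | apply: bnd_sq].
have cvL : cvs (fun e => - ((1 - e ^+ 2) ^+ 2 / e ^+ 2) * dt ^+ 2 *
      \sum_(i < d) pd i (fun y => (p1 e y - pinf (p1 e)) / rhohat dt rho m e y * pd i (p1 e) y) x
    + p1 e x / (gam - 1)) (0 + pc 0%N x * (gam - 1)^-1).
  apply: (cvs_ext _ (cvs_add (cvs_ebnd BL) (cvs_mul (CV_pt CVp x) (cvs_cst _)))).
  move=> e he; have he1 := half1 he; have /andP[e0 _] := he.
  have s1 : \sum_(i < d) pd i (fun y => (p1 e y - pinf (p1 e)) / rhohat dt rho m e y * pd i (p1 e) y) x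
      = e ^+ 4 * \sum_(i < d) pd i (Gi i e) x.
    rewrite big_distrr; apply: eq_bigr => i _; rewrite (hF e i he1).
    exact: (pd_scal _ i (UB_dif x (UBG i) he1)).
  by rewrite s1; field; rewrite g1 gt_eqF.
have cvR : cvs (fun e => - ((1 - e ^+ 2) ^+ 2 / (2 * e ^+ 2)) * (dt ^+ 2 / rhohat dt rho m e x)
        * \sum_(i < d) (pd i (p1 e) x) ^+ 2
    - (1 - e ^+ 2) * dt * (p1 e x - pinf (p1 e)) * \sum_(i < d) pd i (uhat gam dt rho m E i e) x
    + phat gam dt rho m E e x / (gam - 1))
    (0 + (Ec 0%N x + - (dt * \sum_(j < d)
      pd j (fun y => (Ec 0%N y + (0 * P0 + 1 * P0)) * (mc j 0%N y * (rc 0%N y)^-1)) x))).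
  apply: (cvs_ext _ (cvs_add (cvs_ebnd BR) cvEhat)).
  move=> e he; have he1 := half1 he; have /andP[e0 _] := he.
  have [hr _] := hs e he1 x.
  have s2 : \sum_(i < d) (pd i (p1 e) x) ^+ 2 = e ^+ 4 * \sum_(i < d) D i e x ^+ 2.
    by rewrite mulr_sumr; apply: eq_bigr => i _; rewrite hpdp1 //; ring.
  have s3 : \sum_(i < d) pd i (uhat gam dt rho m E i e) x = \sum_(i < d) pd i (U i e) x.
    by apply: eq_bigr => i _; rewrite (huhat e i he1).
  have s4 : \sum_(i < d) (uhat gam dt rho m E i e x) ^+ 2 = \sum_(i < d) U i e x ^+ 2.
    by apply: eq_bigr => i _; rewrite (huhat e i he1).
  have s5 : p1 e x - pinf (p1 e) = e ^+ 2 * (pc 2%N x + e * rp e x + - I e).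
    by rewrite hp1 // hpinf //; ring.
  have r0 : rho1 e x != 0 by rewrite gt_eqF //; have := hr1c e x he1; lra.
  rewrite s2 s3 /phat s4 -hr s5; field.
  by rewrite r0 g1 lt0r_neq0.
have hfin := cvs_uniq cvL (cvs_ext (fun e he => (hs e (half1 he) x).2.2) cvR).
have eqH : \sum_(j < d) pd j (fun y => (Ec 0%N y + (0 * P0 + 1 * P0)) * (mc j 0%N y * (rc 0%N y)^-1)) x
    = gam * P0 / (gam - 1) * \sum_(j < d) pd j (fun y => mc j 0%N y / rc 0%N y) x.
  by rewrite mulr_sumr; apply: eq_bigr => j _; exact: hpdH.
move: hfin; rewrite eqH hEc !add0r => hfin.
have h2 : pc 0%N x = (gam - 1) * (pc 0%N x * (gam - 1)^-1) by field.
rewrite h2 hfin; field.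
by rewrite g1 dt0.
Qed.
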